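(* Consider the stochastic platoon coordination setting described in the context, where the travel times and start times form a random element $\boldsymbol\tau$ taking values in a countable set of realizations $\tau$ with probabilities $\Pr(\boldsymbol\tau=\tau)$, and vehicle $i$'s utility is $U^i(\boldsymbol w^i,\boldsymbol w^{-i})=\sum_{\tau}\Pr(\boldsymbol\tau=\tau)\,U^i(\boldsymbol w^i,\boldsymbol w^{-i},\tau)$. Then the game $G^s=(\mathcal N,\mathcal W,\{U^i\}_{i\in\mathcal N})$, $\mathcal W=\mathcal W^1\times\dots\times\mathcal W^N$, is an exact potential game with potential function $$\Phi(\boldsymbol w)=\sum_{\tau}\Pr(\boldsymbol\tau=\tau)\,\Phi(\boldsymbol w,\tau),\qquad \Phi(\boldsymbol w,\tau)=\sum_{t\in\mathbb Z_+}\sum_{e\in\mathcal E} r\big(|C(e,t,\boldsymbol w,\tau)|,e\big)-\sum_{i\in\mathcal N}\Lambda_i(\boldsymbol w^i),$$ where $r(n,e)=\sum_{j=1}^nR(j,e)$; that is, $\Phi(\boldsymbol w^{i\prime},\boldsymbol w^{-i})-\Phi(\boldsymbol w^{i\prime\prime},\boldsymbol w^{-i})=U^i(\boldsymbol w^{i\prime},\boldsymbol w^{-i})-U^i(\boldsymbol w^{i\prime\prime},\boldsymbol w^{-i})$ for all $i$, all $\boldsymbol w^{i\prime},\boldsymbol w^{i\prime\prime}\in\mathcal W^i$ and all $\boldsymbol w^{-i}$. Hence $G^s$ admits at least one pure Nash equilibrium.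
   Context: Deterministic ingredients: a directed graph $\mathcal G=(\mathcal V,\mathcal E)$; vehicles $\mathcal N=\{1,\dots,N\}$; vehicle $i$ has a fixed path of edges $e^i_1,\dots,e^i_{|\mathcal P^i|}$ with $e^i_k$ from node $v^i_k$ to $v^i_{k+1}$; a finite action set $\mathcal W^i$ of waiting-time vectors $\boldsymbol w^i=(w^i_1,\dots,w^i_{|\mathcal P^i|})\in\mathbb Z_+^{|\mathcal P^i|}$ ($w^i_k$ = waiting time at $v^i_k$); a reward function $R:\mathbb Z_{\ge1}\times\mathcal E\to\mathbb R$; waiting costs $\Lambda_i:\mathcal W^i\to\mathbb R$. A realization $\tau$ consists of travel times $\tau(e,t)\in\mathbb Z_+$ for every $e\in\mathcal E$, $t\in\mathbb Z_+$ (travel time on $e$ when entered at time $t$) and start times $\tau_0^i\in\mathbb Z_+$ (arrival time at $v^i_1$). Given $\tau$ and $\boldsymbol w$, departure times are $t^i_1=\tau^i_0+w^i_1$, $t^i_{k+1}=w^i_{k+1}+t^i_k+\tau(e^i_k,t^i_k)$; $C(e,t,\boldsymbol w,\tau)=\{i:\exists k,\ e^i_k=e,\ t^i_k=t\}$; and $$U^i(\boldsymbol w^i,\boldsymbol w^{-i},\tau)=\sum_{k=1}^{|\mathcal P^i|}R\big(|C(e^i_k,t^i_k,\boldsymbol w,\tau)|,e^i_k\big)-\Lambda_i(\boldsymbol w^i).$$ A game is an exact potential game if a function $\Phi$ on action profiles exists such that any unilateral change of one player's action changes $\Phi$ by exactly the change in that player's utility. A pure Nash equilibrium is a profile from which no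 player can increase its own utility by a unilateral change of action. *)

(* Defs.v *)
From HB Require Import structures.
From mathcomp Require Import all_boot all_order all_algebra.
From mathcomp Require Import all_classical all_reals all_analysis.
Set Implicit Arguments. Unset Strict Implicit. Unset Printing Implicit Defensive.
Import Order.TTheory GRing.Theory Num.Theory numFieldNormedType.Exports.
Local Open Scope ring_scope.

(* A path is a sequence of edges e_1 .. e_m with dst e_k = src e_{k+1};
   as a path in a graph, its vertices v_1 = src e_1, v_2 = dst e_1, ...,
   v_{m+1} = dst e_m are pairwise distinct. *)
Definition is_path (V E : finType) (src dst : E -> V) (es : seq E) : bool :=
  match es with
  | [::] => true
  | e :: es' => path (fun a b => dst a == src b) e es'
                && uniq (src e :: map dst es)
  end.

(* A realization tau: travel times tau(e,t) for every edge and entry time,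
   and start times tau_0^i (arrival time of vehicle i at its first node). *)
Record realization (N : nat) (E : finType) := Realization {
  ttime : E -> nat -> nat;
  tstart : 'I_N -> nat }.

Fixpoint dep_times (E : finType) (tt : E -> nat -> nat) (t : nat)
    (es : seq E) (ws : seq nat) : seq nat :=
  match es, ws with
  | e :: es', wk :: ws' => let tk := (t + wk)%N in
      tk :: dep_times tt (tk + tt e tk)%N es' ws'
  | _, _ => [::]
  end.

Section Game.
Variables (R : realType) (N : nat) (E : finType).
Variable P : 'I_N -> seq E.

Definition deps (w : 'I_N -> seq nat) (tau : realization N E) (i : 'I_N) :=
  dep_times (ttime tau) (tstart tau i) (P i) (w i).

Definition Cset (e : E) (t : nat) (w : 'I_N -> seq nat)
    (tau : realization N E) : {set 'I_N} :=
  [set i | (e, t) \in zip (P i) (deps w tau i)].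

Variables (Rw : nat -> E -> R) (Lam : 'I_N -> seq nat -> R).

Definition Ureal (i : 'I_N) (w : 'I_N -> seq nat) (tau : realization N E) : R :=
  \sum_(et <- zip (P i) (deps w tau i)) Rw #|Cset et.1 et.2 w tau| et.1
  - Lam i (w i).

Definition rcum (n : nat) (e : E) : R := \sum_(1 <= j < n.+1) Rw j e.

Definition Phireal (w : 'I_N -> seq nat) (tau : realization N E) : R :=
  limn (@series R (fun t : nat => \sum_(e : E) rcum #|Cset e t w tau| e))
  - \sum_(i : 'I_N) Lam i (w i).

(* Expectations over the countable family of realizations taus k with
   probabilities p k (series over k). *)
Variables (p : nat -> R) (taus : nat -> realization N E).

Definition Uexp (i : 'I_N) (w : 'I_N -> seq nat) : R :=
  limn (@series R (fun k => p k * Ureal i w (taus k))).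

Definition Phiexp (w : 'I_N -> seq nat) : R :=
  limn (@series R (fun k => p k * Phireal w (taus k))).

End Game.

Definition upd (N : nat) (w : 'I_N -> seq nat) (i : 'I_N) (a : seq nat) :=
  fun j => if j == i then a else w j.

(* Main.v *)
Require Import Defs.
From HB Require Import structures.
From mathcomp Require Import all_boot all_order all_algebra.
From mathcomp Require Import all_classical all_reals all_analysis.
From mathcomp Require Import lra zify.
Import Order.TTheory GRing.Theory Num.Theory numFieldNormedType.Exports.
Local Open Scope ring_scope.

Lemma mem_zip2 (S T : eqType) (s : seq S) (t : seq T) x :
  x \in zip s t -> x.2 \in t.
Proof.
elim: s t => [|a s IH] [|b t] //=.
rewrite in_cons => /orP [/eqP -> | /IH]; first by rewrite /= eqxx.
by move=> ->; rewrite orbT.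
Qed.

Lemma mem_sumn (s : seq nat) t : t \in s -> (t <= sumn s)%N.
Proof.
elim: s => [|a s IH] //=; rewrite in_cons => /orP [/eqP -> | /IH]; lia.
Qed.

Lemma sum_ind (R : realType) (E : finType) (T : nat) (L : seq (E * nat))
  (g : E -> nat -> R) : uniq L -> (forall x, x \in L -> (x.2 < T)%N) ->
  \sum_(0 <= t < T) \sum_(e : E) (if (e, t) \in L then g e t else 0)
  = \sum_(x <- L) g x.1 x.2.
Proof.
elim: L => [|x L IH] /=.
  move=> _ _; rewrite big_nil big1 // => t _; rewrite big1 // => e _.
move=> /andP [xL uL] HT.
rewrite big_cons -IH; last by move=> y yL; apply: HT; rewrite in_cons yL orbT.
2: by [].
have -> : \sum_(0 <= t < T) \sum_(e : E) (if (e, t) \in x :: L then g e t else 0)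
  = \sum_(0 <= t < T) (\sum_(e : E) (if (e, t) == x then g e t else 0)
     + \sum_(e : E) (if (e, t) \in L then g e t else 0)).
  apply: eq_bigr => t _; rewrite -big_split /=; apply: eq_bigr => e _.
  rewrite in_cons; case: eqP => [-> | _] /=; last by rewrite add0r.
  by rewrite (negbTE xL) addr0.
rewrite big_split /=; congr (_ + _).
case: x xL HT => e0 t0 /= _ HT.
have Ht0 : (t0 < T)%N by apply: (HT (e0, t0)); rewrite mem_head.
rewrite (bigD1_seq t0) /=; last by apply: iota_uniq.
  2: by rewrite mem_index_iota.
rewrite [X in _ + X]big1 ?addr0.
  rewrite (eq_bigr (fun e => if e == e0 then g e t0 else 0)).
    by rewrite -big_mkcond big_pred1_eq.
  by move=> e _; rewrite xpair_eqE eqxx andbT.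
move=> t /negbTE tt0; apply: big1 => e _; by rewrite xpair_eqE tt0 andbF.
Qed.

Lemma bound_seq (R : realType) (I : Type) (L : seq I) (f : I -> R) K :
  (forall x, `|f x| <= K) -> `|\sum_(x <- L) f x| <= (size L)%:R * K.
Proof.
move=> Hf; elim: L => [|x L IH]; first by rewrite big_nil normr0 mul0r.
rewrite big_cons /= -addn1 natrD mulrDl mul1r addrC.
by apply: le_trans (ler_normD _ _) _; apply: lerD.
Qed.

Section G.
Variables (R : realType) (N : nat) (E : finType) (P : 'I_N -> seq E).
Variables (Rw : nat -> E -> R) (Lam : 'I_N -> seq nat -> R).
Hypothesis Puniq : forall j, uniq (P j).

Definition tb (w : 'I_N -> seq nat) (tau : realization N E) : nat :=
  (\sum_(j < N) sumn (deps P w tau j)).+1.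

Lemma tb_ok w tau j t : t \in deps P w tau j -> (t < tb w tau)%N.
Proof.
move=> /mem_sumn; rewrite /tb (bigD1 j) //=; lia.
Qed.

Lemma Luniq w tau j : uniq (zip (P j) (deps P w tau j)).
Proof. exact: zip_uniql. Qed.

Lemma rcum0 e : rcum Rw 0 e = 0.
Proof. by rewrite /rcum big_geq. Qed.

Lemma Phireal_eq w tau T :
  (forall j t, t \in deps P w tau j -> (t < T)%N) ->
  Phireal P Rw Lam w tau =
  \sum_(0 <= t < T) \sum_(e : E) rcum Rw #|Cset P e t w tau| e
  - \sum_(i : 'I_N) Lam i (w i).
Proof.
move=> HT; rewrite /Phireal; congr (_ - _).
apply: cvg_lim => //; apply: cvg_near_cst; exists T => // n /= Hn.
rewrite /series /= (@big_cat_nat _ _ _ T) //=.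
rewrite [X in _ + X]big1_seq ?addr0 // => t /andP [_].
rewrite mem_index_iota => /andP [Ht _].
apply: big1 => e _.
suff -> : Cset P e t w tau = finset.set0 by rewrite cards0 rcum0.
apply/setP => j; rewrite !inE; apply/negP => /mem_zip2 /= /HT; lia.
Qed.

Lemma decomp w tau T i :
  (forall j t, t \in deps P w tau j -> (t < T)%N) ->
  Phireal P Rw Lam w tau =
  \sum_(0 <= t < T) \sum_(e : E) rcum Rw #|Cset P e t w tau :\ i| e
  + Ureal P Rw Lam i w tau - \sum_(j | j != i) Lam j (w j).
Proof.
move=> HT; rewrite (@Phireal_eq w tau T HT) (bigD1 i) //= /Ureal.
rewrite -(@sum_ind R E T _ (fun e t => Rw #|Cset P e t w tau| e)); last 2 first.
- exact: Luniq.
- by move=> x /mem_zip2; apply: HT.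
have -> : \sum_(0 <= t < T) \sum_e rcum Rw #|Cset P e t w tau| e =
  \sum_(0 <= t < T) \sum_e rcum Rw #|Cset P e t w tau :\ i| e +
  \sum_(0 <= t < T) \sum_e (if (e, t) \in zip (P i) (deps P w tau i)
                           then Rw #|Cset P e t w tau| e else 0).
  rewrite -big_split; apply: eq_bigr => t _; rewrite -big_split.
  apply: eq_bigr => e _ /=.
  have Hi : (i \in Cset P e t w tau) = ((e, t) \in zip (P i) (deps P w tau i)).
    by rewrite inE.
  rewrite -Hi (cardsD1 i (Cset P e t w tau)).
  case: (i \in Cset P e t w tau); last by rewrite add0n addr0.
  by rewrite add1n /rcum big_nat_recr.
lra.
Qed.

Lemma Cset_inv w1 w2 i e t tau : (forall j, j != i -> w1 j = w2 j) ->
  Cset P e t w1 tau :\ i = Cset P e t w2 tau :\ i.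
Proof.
move=> H; apply/setP => j; rewrite !inE.
case: eqVneq => //= ji; by rewrite /deps H.
Qed.

Lemma invariance w1 w2 i tau : (forall j, j != i -> w1 j = w2 j) ->
  Phireal P Rw Lam w1 tau - Ureal P Rw Lam i w1 tau =
  Phireal P Rw Lam w2 tau - Ureal P Rw Lam i w2 tau.
Proof.
move=> H.
have HT1 : forall j t, t \in deps P w1 tau j -> (t < tb w1 tau + tb w2 tau)%N.
  move=> j t /tb_ok; lia.
have HT2 : forall j t, t \in deps P w2 tau j -> (t < tb w1 tau + tb w2 tau)%N.
  move=> j t /tb_ok; lia.
rewrite (@decomp w1 tau _ i HT1) (@decomp w2 tau _ i HT2).
have -> : \sum_(j | j != i) Lam j (w1 j) = \sum_(j | j != i) Lam j (w2 j).
  by apply: eq_bigr => j /H ->.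
under eq_bigr => t _ do under eq_bigr => e _ do rewrite (@Cset_inv w1 w2 i e t tau H).
lra.
Qed.

End G.

Lemma le_term (R : realType) (I : finType) (F : I -> R) i :
  (forall j, 0 <= F j) -> F i <= \sum_j F j.
Proof. by move=> H; rewrite (bigD1 i) //= lerDl sumr_ge0. Qed.

Lemma cvg_pf (R : realType) (p f : nat -> R) M : (forall k, 0 <= p k) ->
  cvgn (series p) -> (forall k, `|f k| <= M) ->
  cvgn (series (fun k => p k * f k)).
Proof.
move=> p0 cp fM.
have M0 : 0 <= M by apply: le_trans (fM 0%N).
have Hg : cvgn (series (fun k => p k * (f k + M))).
  apply: (@series_le_cvg _ _ ((M + M) *: p)).
  - move=> n; apply: mulr_ge0 => //; move: (fM n); rewrite ler_norml; lra.
  - by move=> n; rewrite /= mulr_ge0 // addr_ge0.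
  - move=> n /=; rewrite mulrC; apply: ler_wpM2r => //.
    move: (fM n); rewrite ler_norml; lra.
  - exact: is_cvg_seriesZ.
have -> : (fun k => p k * f k) = (fun k => p k * (f k + M)) - M *: p.
  apply: funext => k; rewrite !fctE /= mulrDr /GRing.scale /= mulrC; lra.
apply: is_cvg_seriesB => //; exact: is_cvg_seriesZ.
Qed.

Section G.
Variables (R : realType) (N : nat) (E : finType) (P : 'I_N -> seq E).
Variables (Rw : nat -> E -> R) (Lam : 'I_N -> seq nat -> R).
Hypothesis Puniq : forall j, uniq (P j).

Definition K1 := \sum_(n < N.+1) \sum_(e : E) `|Rw n e|.
Definition K2 := \sum_(n < N.+1) \sum_(e : E) `|rcum Rw n e|.

Lemma K1_ge n e : (n <= N)%N -> `|Rw n e| <= K1.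
Proof.
move=> Hn; apply: le_trans (@le_term R E (fun e => `|Rw n e|) e (fun e => normr_ge0 _)) _.
have Ho : (n < N.+1)%N by [].
apply: le_term (Ordinal Ho) _ => j; apply: sumr_ge0 => *; exact: normr_ge0.
Qed.

Lemma K2_ge n e : (n <= N)%N -> `|rcum Rw n e| <= K2.
Proof.
move=> Hn; apply: le_trans (@le_term R E (fun e => `|rcum Rw n e|) e (fun e => normr_ge0 _)) _.
have Ho : (n < N.+1)%N by [].
apply: le_term (Ordinal Ho) _ => j; apply: sumr_ge0 => *; exact: normr_ge0.
Qed.

Lemma K2_0 : 0 <= K2.
Proof. by apply: sumr_ge0 => n _; apply: sumr_ge0. Qed.
Lemma K1_0 : 0 <= K1.
Proof. by apply: sumr_ge0 => n _; apply: sumr_ge0. Qed.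

Lemma card_le (A : {set 'I_N}) : (#|A| <= N)%N.
Proof. by apply: leq_trans (max_card _) _; rewrite card_ord. Qed.

Lemma Ureal_bound w i tau :
  `|Ureal P Rw Lam i w tau| <= (size (P i))%:R * K1 + `|Lam i (w i)|.
Proof.
rewrite /Ureal; apply: le_trans (ler_normB _ _) _; apply: lerD => //.
apply: le_trans (@bound_seq R _ _ (fun et => Rw #|Cset P et.1 et.2 w tau| et.1) K1
  (fun x => @K1_ge _ x.1 (card_le _))) _.
apply: ler_wpM2r; first exact: K1_0.
by rewrite ler_nat size_zip geq_minl.
Qed.

Lemma Phireal_bound w tau :
  `|Phireal P Rw Lam w tau| <=
    K2 * (\sum_(j < N) size (P j))%:R + `|\sum_(i : 'I_N) Lam i (w i)|.
Proof.
rewrite (@Phireal_eq R N E P Rw Lam w tau (@tb N E P w tau)); last first.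
  by move=> j t; apply: tb_ok.
apply: le_trans (ler_normB _ _) _; apply: lerD => //.
set T := @tb N E P w tau.
apply: (@le_trans _ _ (\sum_(0 <= t < T) \sum_(e : E) \sum_(j < N)
   (if (e, t) \in zip (P j) (deps P w tau j) then K2 else 0))).
  apply: le_trans (ler_norm_sum _ _ _) _; apply: ler_sum => t _.
  apply: le_trans (ler_norm_sum _ _ _) _; apply: ler_sum => e _.
  case: (eqVneq (Cset P e t w tau) finset.set0) => [-> | /set0Pn [j0 Hj0]].
    rewrite cards0 rcum0 normr0; apply: sumr_ge0 => j _.
    by case: ifP => // _; exact: K2_0.
  apply: le_trans (@K2_ge _ e (card_le _)) _.
  have := @le_term R _ (fun j => if (e, t) \in zip (P j) (deps P w tau j) then K2 else 0) j0.
  rewrite inE in Hj0; rewrite Hj0; apply => j; case: ifP => // _; exact: K2_0.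
under eq_bigr => t _ do rewrite exchange_big.
rewrite exchange_big /= natr_sum mulr_sumr; apply: ler_sum => j _.
rewrite (@sum_ind R E T _ (fun _ _ => K2)); last 2 first.
- exact: zip_uniql.
- by move=> x /mem_zip2; apply: tb_ok.
apply: le_trans (ler_norm _) _.
apply: le_trans (@bound_seq R _ _ (fun _ => K2) K2 _) _.
  by move=> _; rewrite ger0_norm //; exact: K2_0.
rewrite mulrC; apply: ler_wpM2l; first exact: K2_0.
by rewrite ler_nat size_zip geq_minl.
Qed.

End G.
Local Open Scope classical_set_scope.
Theorem theorem2 (R : realType) (V E : finType) (src dst : E -> V)
  (N : nat) (P : 'I_N -> seq E) (W : 'I_N -> seq (seq nat))
  (Rw : nat -> E -> R) (Lam : 'I_N -> seq nat -> R)
  (p : nat -> R) (taus : nat -> realization N E) :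
  (forall i, is_path src dst (P i)) ->
  (forall i, W i != [::]) ->
  (forall i a, a \in W i -> size a = size (P i)) ->
  (forall k, 0 <= p k) ->
  series p @ \oo --> (1 : R) ->
  (forall (i : 'I_N) (w : 'I_N -> seq nat) (a b : seq nat),
     (forall j, j != i -> w j \in W j) -> a \in W i -> b \in W i ->
     Phiexp P Rw Lam p taus (upd w i a) - Phiexp P Rw Lam p taus (upd w i b)
     = Uexp P Rw Lam p taus i (upd w i a) - Uexp P Rw Lam p taus i (upd w i b))
  /\
  (exists w : 'I_N -> seq nat, (forall j, w j \in W j) /\
     forall (i : 'I_N) (a : seq nat), a \in W i ->
       Uexp P Rw Lam p taus i (upd w i a) <= Uexp P Rw Lam p taus i w).
Proof.
move=> Hpath Wne _ p0 cp.
have Puniq : forall j, uniq (P j).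
  move=> j; move: (Hpath j); rewrite /is_path; case: (P j) => [|e es] // /andP [_].
  by rewrite cons_uniq => /andP [_ /map_uniq].
have cps : cvgn (series p) := cvgP _ cp.
have cvU : forall i w, cvgn (series (fun k => p k * Ureal P Rw Lam i w (taus k))).
  by move=> i w; apply: (@cvg_pf R p _ _ p0 cps) => k; apply: Ureal_bound.
have cvP : forall w, cvgn (series (fun k => p k * Phireal P Rw Lam w (taus k))).
  by move=> w; apply: (@cvg_pf R p _ _ p0 cps) => k; apply: Phireal_bound.
have part1 : forall i w a b,
     Phiexp P Rw Lam p taus (upd w i a) - Phiexp P Rw Lam p taus (upd w i b)
     = Uexp P Rw Lam p taus i (upd w i a) - Uexp P Rw Lam p taus i (upd w i b).
  move=> i w a b.
  suff : Phiexp P Rw Lam p taus (upd w i a) - Uexp P Rw Lam p taus i (upd w i a)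
       = Phiexp P Rw Lam p taus (upd w i b) - Uexp P Rw Lam p taus i (upd w i b).
    by lra.
  rewrite /Phiexp /Uexp -!lim_seriesB //.
  apply: (f_equal (fun u => limn (series u))); apply: funext => k.
  rewrite !fctE -!mulrBr; congr (_ * _).
  by apply: invariance => // j ji; rewrite /upd (negbTE ji).
split; first by move=> i w a b _ _ _; apply: part1.
set M := (\max_(j < N) size (W j))%N.
pose prof (f : {ffun 'I_N -> 'I_M.+1}) j := nth (head [::] (W j)) (W j) (f j).
have prof_ok f j : prof f j \in W j.
  rewrite /prof; case: (ltnP (f j) (size (W j))) => H; first exact: mem_nth.
  rewrite nth_default //; move: (Wne j); case: (W j) => //= x s _.
  by rewrite inE eqxx.
pose F f := Phiexp P Rw Lam p taus (prof f).
have [f _ fmax] := @arg_maxP _ R _ [ffun=> ord0] predT F isT.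
exists (prof f); split => // i a aW.
pose g : {ffun 'I_N -> 'I_M.+1} :=
  [ffun j => if j == i then inord (index a (W i)) else f j].
have eq1 : upd (prof f) i a = prof g.
  apply: funext => j; rewrite /upd /prof ffunE; case: eqP => [-> | _] //.
  rewrite inordK ?nth_index //.
  have H1 : (index a (W i) < size (W i))%N by rewrite index_mem.
  have H2 : (size (W i) <= M)%N by rewrite /M; apply: (leq_bigmax (F := fun j => size (W j)) i).
  lia.
have eq2 : upd (prof f) i (prof f i) = prof f.
  by apply: funext => j; rewrite /upd; case: eqP => [-> |].
have := part1 i (prof f) a (prof f i); rewrite eq2 eq1.
have H1 : F g <= F f := fmax g isT.
move: H1; rewrite /F; lra.
Qed.
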